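(* Let $m_{11},m_{12},m_{13},l_1,l_2\in k$ with $(m_{11},m_{12},m_{13})\neq0$, $m_{12}l_1^2+m_{13}l_2^2=m_{11}$, $l_1=0$ and $l_2\neq0$, and let $M=\begin{pmatrix}m_{11}&m_{12}&m_{13}\\ l_1m_{11}&l_1m_{12}&l_1m_{13}\\ l_2m_{11}&l_2m_{12}&l_2m_{13}\end{pmatrix}$. Then: (1) if $m_{12}\neq0$ and $m_{13}\neq0$, then $\mathcal{A}_{\mathcal{O}_{-1}(k^3)}(M)\cong\mathcal{A}_{\mathcal{O}_{-1}(k^3)}(E_{11}+E_{12}+E_{13}+E_{31}+E_{32}+E_{33})$; (2) if $m_{12}=0$ and $m_{13}\neq0$, then $\mathcal{A}_{\mathcal{O}_{-1}(k^3)}(M)\cong\mathcal{A}_{\mathcal{O}_{-1}(k^3)}(E_{11}+E_{13}+E_{31}+E_{33})$; (3) if $m_{12}\neq0$ and $m_{13}=0$, then $\mathcal{A}_{\mathcal{O}_{-1}(k^3)}(M)\cong\mathcal{A}_{\mathcal{O}_{-1}(k^3)}(E_{12}+E_{32})$.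
   Context: $k$ is an algebraically closed field of characteristic zero. $E_{ij}$ denotes the $3\times3$ matrix unit with $1$ in position $(i,j)$. For $M=(m_{ij})\in M_3(k)$, $\mathcal{A}_{\mathcal{O}_{-1}(k^3)}(M)$ is the connected cochain DG algebra whose underlying graded algebra is generated by degree-one $x_1,x_2,x_3$ subject to $x_ix_j=-x_jx_i$ ($i<j$), with differential determined by $\partial(x_i)=\sum_j m_{ij}x_j^2$ and the Leibniz rule; $\cong$ means isomorphism of DG algebras. *)

(* Defs.v *)
From HB Require Import structures.
From mathcomp Require Import all_boot all_order all_algebra.
From mathcomp Require Import mpoly.
Set Implicit Arguments. Unset Strict Implicit. Unset Printing Implicit Defensive.
Import Order.TTheory GRing.Theory.
Local Open Scope ring_scope.

(* The graded algebra O_{-1}(k^3) = k<x1,x2,x3>/(x_i x_j + x_j x_i, i<j) is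
   modelled on the k-vector space {mpoly k[3]}: the monomial 'X_[m] stands for
   the ordered monomial x1^(m 0) x2^(m 1) x3^(m 2), whose (cohomological) degree
   is mdeg m.  The twisted (skew) product of ordered monomials is
     x^m * x^n = (-1)^(sum_{i>j} m_i n_j) x^(m+n),
   extended bilinearly.  (The commutative product of {mpoly} is NOT used as the
   algebra product; it only appears in 'X_j ^+ 2 which is the basis vector x_j^2,
   equal to the skew square of x_j.) *)

Section SkewPoly.
Variable k : fieldType.

Definition sk_i0 : 'I_3 := @Ordinal 3 0 isT.
Definition sk_i1 : 'I_3 := @Ordinal 3 1 isT.
Definition sk_i2 : 'I_3 := @Ordinal 3 2 isT.

Definition skew_sign (m n : 'X_{1..3}) : k :=
  (-1) ^+ (m sk_i1 * n sk_i0 + m sk_i2 * n sk_i0 + m sk_i2 * n sk_i1)%N.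

Definition skew_mul (p q : {mpoly k[3]}) : {mpoly k[3]} :=
  \sum_(m <- msupp p) \sum_(n <- msupp q)
     (p@_m * q@_n * skew_sign m n) *: 'X_[m + n].

Definition is_diff (M : 'M[k]_3) (d : {mpoly k[3]} -> {mpoly k[3]}) : Prop :=
  [/\ forall (a : k) p q, d (a *: p + q) = a *: d p + d q,
      forall i : 'I_3, d 'X_i = \sum_(j < 3) M i j *: 'X_j ^+ 2 &
      forall (n : nat) p q, p \is n.-homog ->
        d (skew_mul p q) = skew_mul (d p) q + (-1) ^+ n *: skew_mul p (d q)].

Definition dg_iso (d d' : {mpoly k[3]} -> {mpoly k[3]}) : Prop :=
  exists f : {mpoly k[3]} -> {mpoly k[3]},
    [/\ (forall (a : k) p q, f (a *: p + q) = a *: f p + f q) /\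
        bijective f,
        forall (n : nat) p, p \is n.-homog -> f p \is n.-homog,
        f 1 = 1,
        forall p q, f (skew_mul p q) = skew_mul (f p) (f q) &
        forall p, f (d p) = d' (f p)].

Definition dg_isomorphic (M N : 'M[k]_3) : Prop :=
  forall d d', is_diff M d -> is_diff N d' -> dg_iso d d'.

Definition Emx (i j : 'I_3) : 'M[k]_3 := delta_mx i j.

End SkewPoly.
Arguments Emx {k}.

(* Main.v *)
Require Import Defs.
From HB Require Import structures.
From mathcomp Require Import all_boot all_order all_algebra.
From mathcomp Require Import mpoly.
From mathcomp Require Import ring.
Import Order.TTheory GRing.Theory.
Local Open Scope ring_scope.

Section Gen.
Variable k : fieldType.
Implicit Types (p q : {mpoly k[3]}).

Definition Lin (F : {mpoly k[3]} -> {mpoly k[3]}) :=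
  forall (a : k) p q, F (a *: p + q) = a *: F p + F q.

Lemma Lin0 F : Lin F -> F 0 = 0.
Proof.
move=> LF; have := LF 1 0 0; rewrite !scale1r addr0.
by move/(congr1 (fun x => x - F 0)); rewrite subrr addrK => <-.
Qed.

Lemma LinZ F a p : Lin F -> F (a *: p) = a *: F p.
Proof. by move=> LF; rewrite -[a *: p]addr0 LF Lin0 // addr0. Qed.

Lemma LinD F p q : Lin F -> F (p + q) = F p + F q.
Proof. by move=> LF; have := LF 1 p q; rewrite !scale1r. Qed.

Lemma LinN F p : Lin F -> F (- p) = - F p.
Proof. by move=> LF; rewrite -scaleN1r LinZ // scaleN1r. Qed.

Lemma Lin_sumX F (r : seq 'X_{1..3}) (a : 'X_{1..3} -> k) : Lin F ->
  F (\sum_(m <- r) a m *: 'X_[m]) = \sum_(m <- r) a m *: F 'X_[m].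
Proof.
move=> LF; elim: r => [|m r IH]; first by rewrite !big_nil Lin0.
by rewrite !big_cons LF IH.
Qed.

Lemma Lin_ext F G : Lin F -> Lin G -> (forall m, F 'X_[m] = G 'X_[m]) ->
  forall p, F p = G p.
Proof.
move=> LF LG H p; rewrite [p]mpolyE !Lin_sumX //.
by apply: eq_bigr => m _; rewrite H.
Qed.

Lemma Lin_comp F G : Lin F -> Lin G -> Lin (F \o G).
Proof. by move=> LF LG a p q /=; rewrite LG LF. Qed.

Lemma sum_msupp_ext (V : zmodType) p (s : seq 'X_{1..3}) (F : 'X_{1..3} -> V) :
  uniq s -> {subset msupp p <= s} -> (forall m, p@_m = 0 -> F m = 0) ->
  \sum_(m <- msupp p) F m = \sum_(m <- s) F m.
Proof.
move=> us sub H0; rewrite [RHS](bigID (mem (msupp p))) /=.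
rewrite [X in _ = _ + X]big1 ?addr0; last first.
  by move=> m; rewrite mcoeff_msupp negbK => /eqP /H0.
rewrite -[RHS]big_filter; apply: perm_big; apply: uniq_perm.
- exact: msupp_uniq.
- exact: filter_uniq.
by move=> m; rewrite mem_filter; case E: (m \in msupp p) => //=; rewrite sub.
Qed.

Lemma skew_mulE p q s t : uniq s -> uniq t -> {subset msupp p <= s} ->
  {subset msupp q <= t} ->
  skew_mul p q = \sum_(m <- s) \sum_(n <- t)
     (p@_m * q@_n * skew_sign k m n) *: 'X_[m + n].
Proof.
move=> us ut sp st; rewrite /skew_mul (@sum_msupp_ext _ p s _ us sp); last first.
  by move=> m pm0; apply: big1 => n _; rewrite pm0 !mul0r scale0r.
apply: eq_bigr => m _; apply: sum_msupp_ext => // n qn0.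
by rewrite qn0 mulr0 mul0r scale0r.
Qed.

Lemma msupp_lin_sub a p p' :
  {subset msupp (a *: p + p') <= undup (msupp p ++ msupp p')}.
Proof.
move=> m /msuppD_le; rewrite mem_undup !mem_cat => /orP [/msuppZ_le -> //|->].
by rewrite orbT.
Qed.

Lemma sub_undup_l (s t : seq 'X_{1..3}) : {subset s <= undup (s ++ t)}.
Proof. by move=> m; rewrite mem_undup mem_cat => ->. Qed.
Lemma sub_undup_r (s t : seq 'X_{1..3}) : {subset t <= undup (s ++ t)}.
Proof. by move=> m; rewrite mem_undup mem_cat => ->; rewrite orbT. Qed.

Lemma skew_mul_linl q : Lin (fun p => skew_mul p q).
Proof.
move=> a p p' /=; pose s := undup (msupp p ++ msupp p').
have us : uniq s by apply: undup_uniq.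
rewrite !(@skew_mulE _ q s (msupp q)) ?msupp_uniq //; try exact: msupp_lin_sub; try exact: sub_undup_l; try exact: sub_undup_r.
rewrite scaler_sumr -big_split /=; apply: eq_bigr => m _.
rewrite scaler_sumr -big_split /=; apply: eq_bigr => n _.
by rewrite mcoeffD mcoeffZ !mulrDl scalerDl scalerA !mulrA.
Qed.

Lemma skew_mul_linr p : Lin (fun q => skew_mul p q).
Proof.
move=> a q q' /=; pose t := undup (msupp q ++ msupp q').
have ut : uniq t by apply: undup_uniq.
rewrite !(@skew_mulE p _ (msupp p) t) ?msupp_uniq //; try exact: msupp_lin_sub; try exact: sub_undup_l; try exact: sub_undup_r.
rewrite scaler_sumr -big_split /=; apply: eq_bigr => m _.
rewrite scaler_sumr -big_split /=; apply: eq_bigr => n _.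
rewrite mcoeffD mcoeffZ mulrDr !mulrDl scalerDl scalerA; congr (_ *: _ + _).
by rewrite mulrCA !mulrA.
Qed.

Lemma skew_mulX m n :
  skew_mul 'X_[m] 'X_[n] = skew_sign k m n *: 'X_[m + n].
Proof. by rewrite /skew_mul !msuppX !big_seq1 !mcoeffX !eqxx !mul1r. Qed.


Lemma Lin_sum F (I : Type) (r : seq I) (G : I -> {mpoly k[3]}) : Lin F ->
  F (\sum_(j <- r) G j) = \sum_(j <- r) F (G j).
Proof.
move=> LF; elim: r => [|j r IH]; first by rewrite !big_nil Lin0.
by rewrite !big_cons LinD // IH.
Qed.

Lemma skew_mul1r p : skew_mul 1 p = p.
Proof.
apply: (@Lin_ext (fun p => skew_mul 1 p) id) => //; first exact: skew_mul_linr.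
move=> m /=; rewrite -mpolyX0 skew_mulX add0m /skew_sign !mnm0E !mul0n.
by rewrite expr0 scale1r.
Qed.

Lemma skew_mulr1 p : skew_mul p 1 = p.
Proof.
apply: (@Lin_ext (fun p => skew_mul p 1) id) => //; first exact: skew_mul_linl.
move=> m /=; rewrite -mpolyX0 skew_mulX addm0 /skew_sign !mnm0E !muln0.
by rewrite expr0 scale1r.
Qed.

Lemma skew_mul_skew a b p q :
  skew_mul (a *: p) (b *: q) = (a * b) *: skew_mul p q.
Proof.
rewrite (LinZ _ _ _ (skew_mul_linr (a *: p))) (LinZ _ _ _ (skew_mul_linl q)).
by rewrite scalerA mulrC.
Qed.

Definition fm (c : 'I_3 -> k) (p : {mpoly k[3]}) : {mpoly k[3]} :=
  p \mPo [tuple c i *: 'X_i | i < 3].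
Definition wt (c : 'I_3 -> k) (m : 'X_{1..3}) : k := \prod_(i < 3) c i ^+ m i.

Lemma fm_lin c : Lin (fm c).
Proof. by move=> a p q; rewrite /fm comp_mpolyD comp_mpolyZ. Qed.

Lemma fmX c m : fm c 'X_[m] = wt c m *: 'X_[m].
Proof.
rewrite /fm comp_mpolyX.
under eq_bigr => i _ do rewrite tnth_map tnth_ord_tuple exprZn.
by rewrite scaler_prod -mpolyXE_id.
Qed.

Lemma wtD c m n : wt c (m + n) = wt c m * wt c n.
Proof. by rewrite /wt -big_split; apply: eq_bigr => i _; rewrite mnmDE exprD. Qed.

Lemma wtU c i : wt c U_(i) = c i.
Proof.
rewrite /wt (bigD1 i) //= mnm1E eqxx expr1 big1 ?mulr1 //.
by move=> j /negbTE ji; rewrite mnm1E eq_sym ji expr0.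
Qed.

Lemma fmXi c i : fm c 'X_i = c i *: 'X_i.
Proof. by rewrite fmX wtU. Qed.

Lemma fm_mul c p q : fm c (skew_mul p q) = skew_mul (fm c p) (fm c q).
Proof.
have H m q' : fm c (skew_mul 'X_[m] q') = skew_mul (fm c 'X_[m]) (fm c q').
  apply: (@Lin_ext (fun q => fm c (skew_mul 'X_[m] q))
                   (fun q => skew_mul (fm c 'X_[m]) (fm c q))).
  - exact: Lin_comp _ _ (fm_lin c) (skew_mul_linr _).
  - exact: Lin_comp _ _ (skew_mul_linr _) (fm_lin c).
  move=> n /=; rewrite skew_mulX (LinZ _ _ _ (fm_lin c)) !fmX skew_mul_skew.
  by rewrite skew_mulX !scalerA wtD [X in X *: _ = _]mulrC.
apply: (@Lin_ext (fun p => fm c (skew_mul p q))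
                 (fun p => skew_mul (fm c p) (fm c q))).
- exact: Lin_comp _ _ (fm_lin c) (skew_mul_linl _).
- exact: Lin_comp _ _ (skew_mul_linl _) (fm_lin c).
by move=> m; exact: H.
Qed.

Lemma fm_homog c n p : p \is n.-homog -> fm c p \is n.-homog.
Proof.
move=> hp; rewrite [p]mpolyE (Lin_sum _ _ _ _ (fm_lin c)) big_seq.
apply: rpred_sum => m Hm; rewrite (LinZ _ _ _ (fm_lin c)) fmX.
apply: rpredZ; apply: rpredZ; rewrite dhomogX; apply/eqP.
exact: (dhomog_mf hp).
Qed.

Lemma fm1 c : fm c 1 = 1.
Proof. exact: comp_mpoly1. Qed.

Lemma fm_bij c : (forall i, c i != 0) -> bijective (fm c).
Proof.
move=> cnz; exists (fm (fun i => (c i)^-1)).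
- apply: (@Lin_ext (fm (fun i => (c i)^-1) \o fm c) id) => //.
  + exact: Lin_comp _ _ (fm_lin _) (fm_lin _).
  move=> m /=; rewrite fmX (LinZ _ _ _ (fm_lin _)) fmX scalerA /wt -big_split /=.
  by rewrite big1 ?scale1r // => i _; rewrite -exprMn mulfV // expr1n.
- apply: (@Lin_ext (fm c \o fm (fun i => (c i)^-1)) id) => //.
  + exact: Lin_comp _ _ (fm_lin _) (fm_lin _).
  move=> m /=; rewrite fmX (LinZ _ _ _ (fm_lin _)) fmX scalerA /wt -big_split /=.
  by rewrite big1 ?scale1r // => i _; rewrite -exprMn mulVf // expr1n.
Qed.


Lemma mnm_dec (m : 'X_{1..3}) n : mdeg m = n.+1 ->
  exists i m', m = (U_(i) + m')%MM /\ mdeg m' = n.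
Proof.
move=> Hm; case: (boolP [exists i : 'I_3, 0 < m i]%N) => [/existsP [i Hi]|].
  pose m' := [multinom (m j - (i == j))%N | j < 3].
  have E : m = (U_(i) + m')%MM.
    apply/mnmP => j; rewrite mnmDE mnm1E mnmE.
    by case: eqP => [<-|_] /=; [rewrite subnKC | rewrite subn0].
  exists i, m'; split => //.
  by move: Hm; rewrite E mdegD mdeg1 add1n => -[].
rewrite negb_exists => /forallP H.
suff : mdeg m = 0%N by rewrite Hm.
rewrite mdegE big1 // => i _; have := H i; by rewrite lt0n negbK => /eqP.
Qed.

Lemma diff_lin (M : 'M[k]_3) d : is_diff M d -> Lin d.
Proof. by case. Qed.

Lemma diff1 (M : 'M[k]_3) d : is_diff M d -> d 1 = 0.
Proof.
move=> [L G Le]; have := Le 0%N 1 1 (dhomog1 _ _).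
rewrite !skew_mul1r !skew_mulr1 expr0 scale1r => /(congr1 (fun x => x - d 1)).
by rewrite subrr addrK => <-.
Qed.

Lemma main_iso (M N : 'M[k]_3) d d' (c : 'I_3 -> k) :
  (forall i, c i != 0) -> is_diff M d -> is_diff N d' ->
  (forall i j, M i j * c j ^+ 2 = c i * N i j) -> dg_iso d d'.
Proof.
move=> cnz dM dN HMN.
have Ld := diff_lin _ _ dM; have Ld' := diff_lin _ _ dN.
have [_ Gd Led] := dM; have [_ Gd' Led'] := dN.
have gen i : fm c (d 'X_i) = d' (fm c 'X_i).
  rewrite Gd fmXi (LinZ _ _ _ Ld') Gd' (Lin_sum _ _ _ _ (fm_lin c)) scaler_sumr.
  apply: eq_bigr => j _; rewrite (LinZ _ _ _ (fm_lin c)).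
  by rewrite expr2 -mpolyXD fmX wtD wtU !scalerA -expr2 HMN.
have com p : fm c (d p) = d' (fm c p).
  apply: (@Lin_ext (fm c \o d) (d' \o fm c)).
  - exact: Lin_comp _ _ (fm_lin c) Ld.
  - exact: Lin_comp _ _ Ld' (fm_lin c).
  move=> m; move Hn: (mdeg m) => n; elim: n m Hn => [|n IH] m Hn /=.
    move/eqP: Hn; rewrite mdeg_eq0 => /eqP ->; rewrite mpolyX0 fm1.
    by rewrite (diff1 _ _ dM) (diff1 _ _ dN) (Lin0 _ (fm_lin c)).
  have [i [m' [-> Hm']]] := mnm_dec _ _ Hn.
  pose s := skew_sign k U_(i) m'.
  have E : 'X_[U_(i) + m'] = s *: skew_mul 'X_i 'X_[m'].
    by rewrite skew_mulX scalerA -expr2 sqrr_sign scale1r.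
  rewrite E (LinZ _ _ _ Ld) (LinZ _ _ _ (fm_lin c)) (LinZ _ _ _ (fm_lin c)).
  rewrite (LinZ _ _ _ Ld'); congr (_ *: _).
  have h1 : ('X_i : {mpoly k[3]}) \is 1.-homog by rewrite dhomogX /= mdeg1.
  rewrite (Led _ _ _ h1) fm_mul (Led' _ _ _ (fm_homog c _ _ h1)).
  rewrite (LinD _ _ _ (fm_lin c)) (LinZ _ _ _ (fm_lin c)) !fm_mul gen.
  by move: (IH m' Hm') => /= ->.
exists (fm c); split.
- by split; [exact: fm_lin | exact: fm_bij].
- by move=> n p; apply: fm_homog.
- exact: fm1.
- exact: fm_mul.
- exact: com.
Qed.


End Gen.

Lemma ord3_cases (P : 'I_3 -> Prop) : P sk_i0 -> P sk_i1 -> P sk_i2 -> forall i, P i.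
Proof.
move=> H0 H1 H2 [[|[|[|i]]] Hi] //.
- by have -> : Ordinal Hi = sk_i0 by apply: val_inj.
- by have -> : Ordinal Hi = sk_i1 by apply: val_inj.
- by have -> : Ordinal Hi = sk_i2 by apply: val_inj.
Qed.

Lemma sqrt_ex (k : closedFieldType) (x : k) : exists y, y ^+ 2 = x.
Proof.
have [y Dy] := @solve_monicpoly k 2 (nth 0 [:: x]) isT.
by exists y; rewrite Dy !big_ord_recl big_ord0 mul0r mulr1 !addr0.
Qed.

Theorem lemma7p3 (k : closedFieldType) (hchar : [pchar k] =i pred0)
    (m11 m12 m13 l1 l2 : k) :
  ~ [/\ m11 = 0, m12 = 0 & m13 = 0] ->
  m12 * l1 ^+ 2 + m13 * l2 ^+ 2 = m11 ->
  l1 = 0 -> l2 != 0 ->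
  let M : 'M[k]_3 :=
    \matrix_(i < 3, j < 3) ([:: 1; l1; l2]`_i * [:: m11; m12; m13]`_j) in
  [/\ (m12 != 0 -> m13 != 0 ->
        dg_isomorphic M
          (Emx sk_i0 sk_i0 + Emx sk_i0 sk_i1 + Emx sk_i0 sk_i2
           + Emx sk_i2 sk_i0 + Emx sk_i2 sk_i1 + Emx sk_i2 sk_i2)),
      (m12 = 0 -> m13 != 0 ->
        dg_isomorphic M
          (Emx sk_i0 sk_i0 + Emx sk_i0 sk_i2 + Emx sk_i2 sk_i0 + Emx sk_i2 sk_i2)) &
      (m12 != 0 -> m13 = 0 ->
        dg_isomorphic M (Emx sk_i0 sk_i1 + Emx sk_i2 sk_i1))].
Proof.
move=> Hnz Hm l1z l2nz M; subst l1.
rewrite expr0n /= mulr0 add0r in Hm.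
split => h12 h13 d d' dM dN.
{ have m11nz : m11 != 0 by rewrite -Hm mulf_neq0 // expf_neq0.
  have [b Hb] := sqrt_ex _ (m11^-1 / m12).
  have bnz : b != 0.
    by apply/eqP => b0; move: Hb; rewrite b0 expr0n /= => /esym/eqP;
       rewrite mulf_eq0 !invr_eq0 (negbTE m11nz) (negbTE h12).
  apply: (@main_iso _ M _ d d' (fun i => [:: m11^-1; b; m11^-1 * l2]`_i) _ dM dN).
    move=> i; elim/ord3_cases: i => //=; rewrite ?invr_eq0 // mulf_neq0 // invr_eq0 //.
  move=> i j; elim/ord3_cases: i; elim/ord3_cases: j; rewrite !mxE /=.
  all: rewrite /Emx ?mxE /=.
  all: rewrite ?Hb -?Hm; field.
  all: by rewrite ?l2nz ?h12 ?h13. }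
{ have m11nz : m11 != 0 by rewrite -Hm mulf_neq0 // expf_neq0.
  apply: (@main_iso _ M _ d d' (fun i => [:: m11^-1; 1; m11^-1 * l2]`_i) _ dM dN).
    move=> i; elim/ord3_cases: i => //=; rewrite ?invr_eq0 ?oner_eq0 // mulf_neq0 // invr_eq0 //.
  move=> i j; elim/ord3_cases: i; elim/ord3_cases: j; rewrite !mxE /=.
  all: rewrite /Emx ?mxE /= ?h12.
  all: rewrite -?Hm; field.
  all: by rewrite ?l2nz ?h12 ?h13. }
{ have [b Hb] := sqrt_ex _ (m12^-1).
  have bnz : b != 0.
    by apply/eqP => b0; move: Hb; rewrite b0 expr0n /= => /esym/eqP;
       rewrite !invr_eq0 (negbTE h12).
  have m110 : m11 = 0 by rewrite -Hm h13 mul0r.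
  apply: (@main_iso _ M _ d d' (fun i => [:: 1; b; l2]`_i) _ dM dN).
    move=> i; elim/ord3_cases: i => //=; rewrite ?oner_eq0 //.
  move=> i j; elim/ord3_cases: i; elim/ord3_cases: j; rewrite !mxE /=.
  all: rewrite /Emx ?mxE /= ?h13 ?m110 ?Hb.
  all: field.
  all: by rewrite ?l2nz ?h12 ?h13. }
Qed.
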